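(* Let $S\ni h$ be a polarized lattice. For any pair $\Delta',\Delta''$ of Weyl chambers for $\operatorname{rt}(S,h)$, there are canonical isomorphisms $\operatorname{Fn}_{\Delta'}(S,h)\cong\operatorname{Fn}_{\Delta''}(S,h)$ and $\operatorname{Fex}_{\Delta'}(S,h)\cong\operatorname{Fex}_{\Delta''}(S,h)$.
   Context: All lattices are even and nondegenerate. A polarized lattice is $(S,h)$ with $S$ hyperbolic and $h^2>0$. $\operatorname{root}_n(S,h)=\{r\in S: r^2=-2,\ r\cdot h=n\}$; $\operatorname{rt}(S,h)$ is the root lattice generated by $\operatorname{root}_0(S,h)$. A Weyl chamber $\Delta$ is determined by its positive roots $P_\Delta$, and $\mathfrak{b}(\Delta)$ is its set of simple (indecomposable positive) roots, called exceptional divisors. The Fano graph $\operatorname{Fn}_\Delta(S,h)=\{l\in\operatorname{root}_1(S,h): l\cdot e\ge0\ \forall e\in\mathfrak{b}(\Delta)\}$ has edges of multiplicity $l_1\cdot l_2$ between distinct vertices. The extended Fano graph $\operatorname{Fex}_\Delta(S,h)=\operatorname{Fn}_\Delta(S,h)\cup\mathfrak{b}(\Delta)$ has the same edge convention and vertices colored by $v\cdot h\in\{0,1\}$; isomorphisms are of (bi-colored) graphs. *)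

(* Defs.v *)
From mathcomp Require Import all_boot all_order all_algebra.
Set Implicit Arguments. Unset Strict Implicit. Unset Printing Implicit Defensive.
Import Order.TTheory GRing.Theory Num.Theory.
Local Open Scope ring_scope.

(* A lattice S of rank n is Z^n (row vectors) with the bilinear form
   x.y = x G y^T given by an integer Gram matrix G. *)
Definition dot (n : nat) (G : 'M[int]_n) (x y : 'rV[int]_n) : int :=
  (x *m G *m y^T) 0 0.

Definition even_nondeg_lattice (n : nat) (G : 'M[int]_n) : Prop :=
  [/\ G^T = G, (forall i, (2 %| G i i)%Z) & \det G != 0].

(* hyperbolic = signature (1, n-1): some v with v^2 > 0 whose orthogonal
   complement is negative definite *)
Definition hyperbolic (n : nat) (G : 'M[int]_n) : Prop :=
  exists v : 'rV[int]_n, 0 < dot G v v /\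
    forall x, dot G x v = 0 -> x != 0 -> dot G x x < 0.

Definition roots_ (n : nat) (G : 'M[int]_n) (h : 'rV[int]_n) (k : int)
  (r : 'rV[int]_n) : bool :=
  (dot G r r == -2) && (dot G r h == k).

(* A Weyl chamber of rt(S,h), represented by its set of positive roots P:
   P = { r in root_0 : r.x > 0 } for some x not orthogonal to any root of
   rt(S,h) (these are exactly the elements of root_0(S,h)). *)
Definition is_weyl_chamber (n : nat) (G : 'M[int]_n) (h : 'rV[int]_n)
  (P : pred 'rV[int]_n) : Prop :=
  (forall r, P r -> roots_ G h 0 r) /\
  exists x : 'rV[int]_n,
    (forall r, roots_ G h 0 r -> dot G r x != 0) /\
    (forall r, roots_ G h 0 r -> (P r <-> 0 < dot G r x)).

(* b(Delta): simple (indecomposable positive) roots = exceptional divisors *)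
Definition exceptional (n : nat) (P : pred 'rV[int]_n) (e : 'rV[int]_n) : Prop :=
  P e /\ ~ (exists a b, [/\ P a, P b & e = a + b]).

Definition Fn (n : nat) (G : 'M[int]_n) (h : 'rV[int]_n) (P : pred 'rV[int]_n)
  (l : 'rV[int]_n) : Prop :=
  roots_ G h 1 l /\ (forall e, exceptional P e -> 0 <= dot G l e).

Definition Fex (n : nat) (G : 'M[int]_n) (h : 'rV[int]_n) (P : pred 'rV[int]_n)
  (v : 'rV[int]_n) : Prop :=
  Fn G h P v \/ exceptional P v.

Definition refl (n : nat) (G : 'M[int]_n) (r x : 'rV[int]_n) : 'rV[int]_n :=
  x + dot G x r *: r.

Definition weyl_elt (n : nat) (G : 'M[int]_n) (ws : seq 'rV[int]_n)
  : 'rV[int]_n -> 'rV[int]_n :=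
  foldr (fun r f => refl G r \o f) id ws.

(* Main.v *)
Require Import Defs.
From mathcomp Require Import all_boot all_order all_algebra.
From mathcomp Require Import zify ring lra.
From Stdlib Require Import Classical_Prop.
Import Order.TTheory GRing.Theory Num.Theory.
Local Open Scope ring_scope.
Set Implicit Arguments. Unset Strict Implicit.

Section D.
Variables (n : nat) (G : 'M[int]_n).
Implicit Types x y z : 'rV[int]_n.

Lemma dotDl x y z : dot G (x + y) z = dot G x z + dot G y z.
Proof. by rewrite /dot !mulmxDl mxE. Qed.
Lemma dotDr x y z : dot G z (x + y) = dot G z x + dot G z y.
Proof. by rewrite /dot linearD /= mulmxDr mxE. Qed.
Lemma dotZl a x z : dot G (a *: x) z = a * dot G x z.
Proof. by rewrite /dot -!scalemxAl mxE. Qed.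
Lemma dotZr a x z : dot G z (a *: x) = a * dot G z x.
Proof. by rewrite /dot linearZ /= -scalemxAr mxE. Qed.
Lemma dotNl x z : dot G (- x) z = - dot G x z.
Proof. by rewrite -scaleN1r dotZl mulN1r. Qed.
Lemma dotNr x z : dot G z (- x) = - dot G z x.
Proof. by rewrite -scaleN1r dotZr mulN1r. Qed.
Lemma dot0l z : dot G 0 z = 0.
Proof. by rewrite /dot !mul0mx mxE. Qed.
Lemma dot0r z : dot G z 0 = 0.
Proof. by rewrite /dot trmx0 mulmx0 mxE. Qed.
Lemma dotC x y : G^T = G -> dot G x y = dot G y x.
Proof.
move=> sG; rewrite /dot.
have -> : (y *m G *m x^T) 0 0 = ((y *m G *m x^T)^T) 0 0 by rewrite [RHS]mxE.
by rewrite !trmx_mul trmxK sG mulmxA.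
Qed.
End D.

Ltac dexp := rewrite ?(dotDl, dotDr, dotNl, dotNr, dotZl, dotZr).

Lemma perp_nonpos n (G : 'M[int]_n) h :
  G^T = G -> hyperbolic G -> 0 < dot G h h ->
  forall z, dot G z h = 0 -> dot G z z <= 0.
Proof.
move=> sG [v [Vpos Hv]] Hpos z zh.
have nonpos : forall w, dot G w v = 0 -> dot G w w <= 0.
  move=> w wv; have [->|nz] := eqVneq w 0; first by rewrite dot0l.
  exact/ltW/Hv.
have CS : forall z0 h0, dot G z0 v = 0 -> dot G h0 v = 0 ->
    dot G z0 h0 ^+ 2 <= dot G z0 z0 * dot G h0 h0.
  move=> z0 h0 z0v h0v.
  have [A0|An] := eqVneq (dot G z0 z0) 0.
    have -> : z0 = 0.
      apply/eqP; apply/negPn/negP => nz; have := Hv _ z0v nz; by rewrite A0 ltxx.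
    by rewrite dot0l dot0l expr2 !mul0r.
  have Ale : dot G z0 z0 < 0 by rewrite lt_neqAle An nonpos.
  set A := dot G z0 z0; set B := dot G z0 h0; set C := dot G h0 h0.
  have Cle : C <= 0 by exact: nonpos.
  have := nonpos (B *: z0 - A *: h0).
  dexp; rewrite z0v h0v (dotC h0 z0 sG) -/A -/B -/C => /(_ ltac:(ring)) H.
  nia.
set V := dot G v v; set a := dot G z v; set b := dot G h v.
have pv : forall w, dot G (V *: w - dot G w v *: v) v = 0.
  by move=> w; dexp; rewrite -/V; ring.
have := CS _ _ (pv z) (pv h).
have := nonpos _ (pv z); have := nonpos _ (pv h).
dexp; rewrite (dotC v z sG) (dotC v h sG) ?(dotC h z sG) zh -/V -/a -/b.
move: (dot G z z) (dot G h h) Hpos => zz H Hpos.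
move=> hC hA hB.
rewrite leNgt; apply/negP => zzpos.
have p0 : V * zz - a * a <= 0 by nia.
have q0 : V * H - b * b <= 0 by nia.
have : a * a * (b * b) <= (V * zz - a * a) * (V * H - b * b) by nia.
nia.
Qed.

Section R.
Variables (n : nat) (G : 'M[int]_n).
Hypothesis sG : G^T = G.
Implicit Types x y z r : 'rV[int]_n.

Lemma refl_dot r x y : dot G r r = -2 ->
  dot G (refl G r x) (refl G r y) = dot G x y.
Proof.
move=> rr; rewrite /refl; dexp; rewrite rr (dotC r y sG); ring.
Qed.

Lemma refl_adj r x y : dot G x (refl G r y) = dot G (refl G r x) y.
Proof. rewrite /refl; dexp; rewrite (dotC r y sG); ring. Qed.

Lemma refl_invol r x : dot G r r = -2 -> refl G r (refl G r x) = x.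
Proof.
move=> rr; rewrite /refl; dexp; rewrite rr -addrA -scalerDl.
have -> : dot G x r + (dot G x r + dot G x r * -2) = 0 by ring.
by rewrite scale0r addr0.
Qed.

Lemma refl_add r x y : refl G r (x + y) = refl G r x + refl G r y.
Proof. rewrite /refl dotDl scalerDl. by rewrite !addrA (addrAC x y). Qed.

Lemma refl_fix r x : dot G r x = 0 -> refl G r x = x.
Proof. by move=> rx; rewrite /refl (dotC x r sG) rx scale0r addr0. Qed.

Lemma weyl_rcons ws r x : weyl_elt G (rcons ws r) x = weyl_elt G ws (refl G r x).
Proof. by elim: ws => [|s ws IH] //=; rewrite /= IH. Qed.

Variable h : 'rV[int]_n.
Definition R0 := roots_ G h 0.

Lemma W_dot ws x y : (forall r, r \in ws -> R0 r) ->
  dot G (weyl_elt G ws x) (weyl_elt G ws y) = dot G x y.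
Proof.
elim: ws => [|s ws IH] //= Hr.
rewrite refl_dot; last by case/andP: (Hr s (mem_head _ _)) => /eqP.
by apply: IH => r rin; apply: Hr; rewrite inE rin orbT.
Qed.

Lemma W_add ws x y : weyl_elt G ws (x + y) = weyl_elt G ws x + weyl_elt G ws y.
Proof. by elim: ws => [|s ws IH] //=; rewrite IH refl_add. Qed.

Lemma W_h ws : (forall r, r \in ws -> R0 r) -> weyl_elt G ws h = h.
Proof.
elim: ws => [|s ws IH] //= Hr.
rewrite IH; last by move=> r rin; apply: Hr; rewrite inE rin orbT.
by apply: refl_fix; case/andP: (Hr s (mem_head _ _)) => _ /eqP.
Qed.

Lemma W_bij ws : (forall r, r \in ws -> R0 r) -> bijective (weyl_elt G ws).
Proof.
elim: ws => [|s ws IH] /= Hr; first by exists id.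
apply: bij_comp; last by apply: IH => r rin; apply: Hr; rewrite inE rin orbT.
have ss : dot G s s = -2 by case/andP: (Hr s (mem_head _ _)) => /eqP.
by exists (refl G s) => x; apply: refl_invol.
Qed.

Lemma W_roots ws k x : (forall r, r \in ws -> R0 r) ->
  roots_ G h k (weyl_elt G ws x) = roots_ G h k x.
Proof.
move=> Hr; rewrite /roots_ -{1}(W_h Hr) !W_dot //.
Qed.
End R.

Section Desc.
Variables (n : nat) (G : 'M[int]_n) (h x2 : 'rV[int]_n).
Hypothesis sG : G^T = G.
Hypothesis hyp : hyperbolic G.
Hypothesis Hpos : 0 < dot G h h.
Hypothesis g2 : forall r, roots_ G h 0 r -> dot G r x2 != 0.
Implicit Types x y z r : 'rV[int]_n.

Lemma perp_bound z : dot G h h * dot G z z <= dot G z h ^+ 2.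
Proof.
have := perp_nonpos sG hyp Hpos (z := dot G h h *: z - dot G z h *: h).
dexp; rewrite (dotC h z sG) => /(_ ltac:(ring)).
move: (dot G h h) (dot G z z) (dot G z h) Hpos => H a b HH le.
have e : H * (H * a - b * b) + (H * - (b * b) - b * - (b * H)) = H * (H*a - b*b) by ring.
rewrite e pmulr_rle0 // subr_le0 in le; by rewrite expr2.
Qed.

Definition meas y := (dot G y h - dot G x2 h) ^+ 2 - dot G h h * dot G y y
  - dot G h h * dot G x2 x2 + 2 * dot G h h * dot G y x2.

Lemma meas_ge0 y : 0 <= meas y.
Proof.
have := perp_bound (y - x2); rewrite /meas; dexp.
rewrite (dotC x2 y sG); move=> le; nia.
Qed.

Lemma descent N : forall y, meas y <= N%:Z ->
  (forall r, roots_ G h 0 r -> dot G r y != 0) ->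
  exists ws, (forall r, r \in ws -> roots_ G h 0 r) /\
    (forall r, roots_ G h 0 r -> dot G r (weyl_elt G ws y) != 0) /\
    (forall r, roots_ G h 0 r -> 0 <= dot G r (weyl_elt G ws y) * dot G r x2).
Proof.
elim: N => [|N IH] y my gy.
all: case: (classic (exists r, roots_ G h 0 r /\ dot G r y * dot G r x2 < 0)) =>
  [[r [Rr neg]]|nex]; last first.
1,3: exists [::]; split=> //; split=> // r Rr; rewrite leNgt; apply/negP => lt;
  by apply: nex; exists r.
all: have rr : dot G r r = -2 by case/andP: Rr => /eqP.
all: have rh : dot G r h = 0 by case/andP: Rr => _ /eqP.
all: have mr : meas (refl G r y) = meas y + 2 * dot G h h * (dot G r y * dot G r x2)
  by rewrite /meas /refl; dexp; rewrite rh rr (dotC y r sG) ?(dotC x2 r sG); ring.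
all: have := meas_ge0 (refl G r y); rewrite mr.
  move=> ge; nia.
move=> ge.
have [ws [Hws [gws pws]]] : exists ws, (forall r, r \in ws -> roots_ G h 0 r) /\
    (forall s, roots_ G h 0 s -> dot G s (weyl_elt G ws (refl G r y)) != 0) /\
    (forall s, roots_ G h 0 s -> 0 <= dot G s (weyl_elt G ws (refl G r y)) * dot G s x2).
- apply: IH; first nia.
  move=> s Rs; rewrite refl_adj //; apply: gy.
  rewrite /roots_ refl_dot //; case/andP: Rs => -> /eqP sh.
  by rewrite /refl dotDl dotZl sh rh mulr0 addr0.
exists (rcons ws r); split; last split.
- by move=> s; rewrite mem_rcons inE => /orP [/eqP ->|]; [|apply: Hws].
- by move=> s Rs; rewrite weyl_rcons; apply: gws.
- by move=> s Rs; rewrite weyl_rcons; apply: pws.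
Qed.
End Desc.

Theorem lemma2p3 (n : nat) (G : 'M[int]_n) (h : 'rV[int]_n)
    (P1 P2 : pred 'rV[int]_n) :
  even_nondeg_lattice G -> hyperbolic G -> 0 < dot G h h ->
  is_weyl_chamber G h P1 -> is_weyl_chamber G h P2 ->
  exists ws : seq 'rV[int]_n,
    (forall r, r \in ws -> roots_ G h 0 r) /\
    bijective (weyl_elt G ws) /\
    (forall x y, dot G (weyl_elt G ws x) (weyl_elt G ws y) = dot G x y) /\
    weyl_elt G ws h = h /\
    (forall v, Fn G h P1 v <-> Fn G h P2 (weyl_elt G ws v)) /\
    (forall v, Fex G h P1 v <-> Fex G h P2 (weyl_elt G ws v)).
Proof.
move=> [sG _ _] hyp Hpos [P1R [x1 [g1 c1]]] [P2R [x2 [g2 c2]]].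
have [ws [Hws [gws pws]]] := descent sG hyp Hpos (N := `|meas G h x2 x1|%N)
  (y := x1) ltac:(rewrite abszE; exact: ler_norm) g1.
have HR : forall r, r \in ws -> R0 G h r by exact: Hws.
set w := weyl_elt G ws.
have wd : forall x y, dot G (w x) (w y) = dot G x y by move=> x y; exact: (W_dot sG x y HR).
have [g wg gw] := W_bij HR.
move: wg gw; rewrite -/w => wg gw.
have key : forall r, P2 (w r) <-> P1 r.
  move=> r; case Rr: (roots_ G h 0 r); last first.
    split=> [/P2R|/P1R]; last by rewrite Rr.
    by rewrite /w (W_roots sG) // Rr.
  have Rwr : roots_ G h 0 (w r) by rewrite /w (W_roots sG).
  rewrite (c2 _ Rwr) (c1 _ Rr) -(wd r x1).
  have := pws _ Rwr; have := gws _ Rwr; have := g2 _ Rwr.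
  move: (dot G (w r) x2) (dot G (w r) (weyl_elt G ws x1)) => a b.
  move=> /eqP an /eqP bn le; split=> lt; nia.
have exc : forall e, exceptional P1 e <-> exceptional P2 (w e).
  move=> e; split=> [[P1e nd]|[P2e nd]].
    split; first by apply/key.
    move=> [a [b [Pa Pb eab]]]; apply: nd; exists (g a), (g b); split.
    - by apply/key; rewrite gw.
    - by apply/key; rewrite gw.
    - by apply: (can_inj wg); rewrite /w W_add -!/w !gw.
  split; first by apply/key.
  move=> [a [b [Pa Pb eab]]]; apply: nd; exists (w a), (w b); split.
  - by apply/key.
  - by apply/key.
  - by rewrite eab /w W_add.
have fn : forall v, Fn G h P1 v <-> Fn G h P2 (w v).
  move=> v; rewrite /Fn /w (W_roots sG) // -/w; split=> [[Rv He]|[Rv He]]; split=> //.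
    move=> e' He'; have : exceptional P1 (g e') by apply/exc; rewrite gw.
    by move/He; rewrite -wd gw.
  by move=> e /exc /He; rewrite wd.
exists ws; split=> //; split; first exact: (W_bij HR).
split; first exact: wd.
split; first exact: (W_h sG HR).
split; first exact: fn.
move=> v; rewrite /Fex fn exc //.
Qed.
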